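(* Let $\Omega$ be a set and let $G\le\mathrm{Sym}(\Omega)$ be $k$-by-block-transitive on $\Omega$ relative to the equivalence relation $\sim$, for some $k\ge 2$. Then for each $\omega\in\Omega$, the block stabilizer $G([\omega])$ is the largest proper subgroup of $G$ containing $G(\omega)$ (every proper subgroup of $G$ containing $G(\omega)$ is contained in $G([\omega])$). Equivalently, $\sim$ is the coarsest nonuniversal $G$-invariant equivalence relation on $\Omega$.
   Context: Blocks are $\sim$-classes; $[\omega]$ is the block of $\omega$, $G([\omega])$ its setwise stabilizer, $G(\omega)$ the stabilizer of $\omega$. $\Omega^{[k]}$ is the set of $k$-tuples no two entries of which lie in the same block. $G$ is $k$-by-block-transitive if $\sim$ is $G$-invariant, there are at least $k$ blocks, and $G$ is transitive on $\Omega^{[k]}$. *)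

(* Defs.v *)
From mathcomp Require Import all_boot.
Set Implicit Arguments. Unset Strict Implicit. Unset Printing Implicit Defensive.

Definition is_perm_group (Omega : Type) (G : (Omega -> Omega) -> Prop) : Prop :=
  [/\ (forall g, G g -> bijective g),
      G id,
      (forall g h, G g -> G h -> G (g \o h)) &
      (forall g, G g -> exists h, [/\ G h, cancel g h & cancel h g])].

Definition subgroup (Omega : Type) (H G : (Omega -> Omega) -> Prop) : Prop :=
  [/\ (forall g, H g -> G g),
      H id,
      (forall g h, H g -> H h -> H (g \o h)) &
      (forall g, H g -> exists h, [/\ H h, cancel g h & cancel h g])].

Definition proper_subgroup (Omega : Type) (H G : (Omega -> Omega) -> Prop) : Prop :=
  subgroup H G /\ exists g, G g /\ ~ H g.

Definition is_equiv (Omega : Type) (R : Omega -> Omega -> Prop) : Prop :=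
  [/\ (forall x, R x x), (forall x y, R x y -> R y x) &
      (forall x y z, R x y -> R y z -> R x z)].

Definition G_invariant (Omega : Type) (R : Omega -> Omega -> Prop)
  (G : (Omega -> Omega) -> Prop) : Prop :=
  forall g, G g -> forall x y, R x y <-> R (g x) (g y).

Definition block (Omega : Type) (R : Omega -> Omega -> Prop) (w : Omega) : Omega -> Prop :=
  fun x => R x w.

Definition setwise_stab (Omega : Type) (G : (Omega -> Omega) -> Prop) (B : Omega -> Prop) :
  (Omega -> Omega) -> Prop :=
  fun g => G g /\ forall y, B y <-> exists x, B x /\ g x = y.

Definition point_stab (Omega : Type) (G : (Omega -> Omega) -> Prop) (w : Omega) :
  (Omega -> Omega) -> Prop :=
  fun g => G g /\ g w = w.

Definition in_block_tuples (Omega : Type) (R : Omega -> Omega -> Prop) (k : nat)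
  (t : 'I_k -> Omega) : Prop :=
  forall i j : 'I_k, i <> j -> ~ R (t i) (t j).

Definition k_by_block_transitive (Omega : Type) (G : (Omega -> Omega) -> Prop)
  (R : Omega -> Omega -> Prop) (k : nat) : Prop :=
  [/\ is_equiv R, G_invariant R G,
      (exists t : 'I_k -> Omega, in_block_tuples R t) &
      (forall s t : 'I_k -> Omega, in_block_tuples R s -> in_block_tuples R t ->
         exists g, G g /\ forall i, g (s i) = t i)].

(* Main.v *)
Require Import Defs.
From Stdlib Require Import Classical FunctionalExtensionality.
From mathcomp Require Import all_boot.
From mathcomp Require Import fingroup perm.
Set Implicit Arguments. Unset Strict Implicit. Unset Printing Implicit Defensive.

Definition o1 k : 'I_k.+2 := @Ordinal k.+2 1 isT.

Lemma o01 k : (ord0 : 'I_k.+2) <> o1 k.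
Proof. by move=> /(congr1 val). Qed.

Lemma repl (Omega : Type) (R : Omega -> Omega -> Prop) k (t : 'I_k -> Omega) p z :
  is_equiv R -> in_block_tuples R t -> (forall l, l <> p -> ~ R z (t l)) ->
  in_block_tuples R (fun l => if l == p then z else t l).
Proof.
move=> [Rr Rs Rt] Ht Hz i j ij /=.
case: (i =P p) => [ip|ip]; case: (j =P p) => [jp|jp].
- by exfalso; apply: ij; rewrite ip jp.
- exact: Hz j jp.
- by move=> h; apply: (Hz i ip); exact: Rs _ _ h.
- exact: Ht.
Qed.

Lemma perm_block (Omega : Type) (R : Omega -> Omega -> Prop) k (t : 'I_k -> Omega)
  (s : 'I_k -> 'I_k) :
  in_block_tuples R t -> injective s -> in_block_tuples R (t \o s).
Proof. move=> Ht si i j ij; apply: Ht => e; apply: ij; exact: si e. Qed.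

Lemma put_at (Omega : Type) (R : Omega -> Omega -> Prop) k (t : 'I_k -> Omega) p z :
  is_equiv R -> in_block_tuples R t ->
  exists t', [/\ in_block_tuples R t', t' p = z &
     forall q, q <> p -> ~ R z (t q) -> t' q = t q].
Proof.
move=> Req Ht; have [Rr Rs Rtr] := Req.
case: (classic (exists i, R z (t i))) => [[i Hi]|Hn].
- pose s := tperm i p.
  exists (fun l => if l == p then z else t (s l)); split.
  + apply: (@repl _ R k (t \o s) p z) => //; first exact: perm_block (@perm_inj _ s).
    move=> l lp /= Hl.
    have sli : s l <> i.
      move=> e; apply: lp; apply: (@perm_inj _ s). by rewrite e /s tpermR.
    apply: (Ht (s l) i sli). exact: Rtr _ _ _ (Rs _ _ Hl) Hi.
  + by rewrite eqxx.
  + move=> q qp Hq; case: eqP => // _.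
    rewrite /s tpermD //; apply/eqP => e.
    * by apply: Hq; rewrite -e.
    * by apply: qp; rewrite e.
- exists (fun l => if l == p then z else t l); split.
  + apply: repl => // l _ Hl; apply: Hn; by exists l.
  + by rewrite eqxx.
  + by move=> q qp _; case: eqP.
Qed.

Lemma pair_tuple (Omega : Type) (R : Omega -> Omega -> Prop) k (x y : Omega) :
  is_equiv R -> (exists t : 'I_k.+2 -> Omega, in_block_tuples R t) -> ~ R x y ->
  exists s : 'I_k.+2 -> Omega, [/\ in_block_tuples R s, s ord0 = x & s (o1 k) = y].
Proof.
move=> Req [t Ht] nxy; have [Rr Rs Rtr] := Req.
have [t1 [H1 H1x _]] := put_at ord0 x Req Ht.
have [t2 [H2 H2y H2q]] := put_at (o1 k) y Req H1.
exists t2; split => //.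
rewrite H2q ?H1x //.
- by move=> h; apply: nxy; exact: Rs _ _ h.
Qed.

Lemma trans2 (Omega : Type) (G : (Omega -> Omega) -> Prop) (R : Omega -> Omega -> Prop) k
  x y u v : k_by_block_transitive G R k.+2 -> ~ R x y -> ~ R u v ->
  exists g, [/\ G g, g x = u & g y = v].
Proof.
case=> Req _ Hex Htr nxy nuv.
have [s [Hs s0 s1]] := pair_tuple Req Hex nxy.
have [s' [Hs' s0' s1']] := pair_tuple Req Hex nuv.
have [g [Gg Hg]] := Htr s s' Hs Hs'.
exists g; split => //; first by rewrite -s0 Hg.
by rewrite -s1 -s1' Hg.
Qed.

Theorem lemma2p3 (Omega : Type) (G : (Omega -> Omega) -> Prop)
  (R : Omega -> Omega -> Prop) (k : nat) :
  is_perm_group G -> (2 <= k)%N -> k_by_block_transitive G R k ->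
  (forall w : Omega,
     [/\ proper_subgroup (setwise_stab G (block R w)) G,
         (forall g, point_stab G w g -> setwise_stab G (block R w) g) &
         (forall H, proper_subgroup H G -> (forall g, point_stab G w g -> H g) ->
            forall g, H g -> setwise_stab G (block R w) g)])
  /\
  ((exists x y, ~ R x y) /\
   forall R' : Omega -> Omega -> Prop, is_equiv R' -> G_invariant R' G ->
     (exists x y, ~ R' x y) -> forall x y, R' x y -> R x y).
Proof.
move=> HG hk Hkb.
case: k hk Hkb => [|[|k]] // _ Hkb.
have Hkb' := Hkb; case: Hkb' => Req Hinv [t Ht] Htr.
have [Rr Rs Rtr] := Req.
have [HGb HGid HGc HGi] := HG.
have Hz : forall w, exists z, ~ R w z.
{ move=> w; case: (classic (R w (t ord0))) => h.
  - exists (t (o1 k)) => h'. apply: (Ht ord0 (o1 k)); first exact: o01.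
    exact: Rtr _ _ _ (Rs _ _ h) h'.
  - by exists (t ord0). }
have stabE : forall w g, G g -> (setwise_stab G (block R w) g <-> R (g w) w).
{ move=> w g Gg; split.
  - case=> _ H. apply: (proj2 (H (g w))). by exists w; split => //; exact: Rr.
  - move=> hgw; split => // y; split.
    + move=> hy. have [h [Gh gh hg]] := HGi g Gg. exists (h y); split; last exact: hg.
      rewrite /block. apply: (proj2 (Hinv g Gg _ _)). rewrite hg.
      exact: Rtr _ _ _ hy (Rs _ _ hgw).
    + case=> x [hx <-]. rewrite /block. apply: Rtr _ _ _ _ hgw.
      exact: (proj1 (Hinv g Gg _ _) hx). }
split.
- move=> w; split.
  + split; first split.
    * by move=> g [].
    * apply/stabE => //; exact: Rr.
    * move=> g h /[dup] Sg [Gg _] /[dup] Sh [Gh _].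
      have Ggh := HGc g h Gg Gh.
      apply/stabE => //. move/(stabE _ _ Gg): Sg => Sg. move/(stabE _ _ Gh): Sh => Sh.
      apply: Rtr _ _ _ _ Sg. exact: (proj1 (Hinv g Gg _ _) Sh).
    * move=> g /[dup] Sg [Gg _]. have [h [Gh gh hg]] := HGi g Gg.
      exists h; split => //. apply/stabE => //.
      move/(stabE _ _ Gg): Sg => Sg.
      apply: (proj2 (Hinv g Gg _ _)). rewrite hg. exact: Rs _ _ Sg.
    * have [z nz] := Hz w.
      have [g [Gg gw gz]] := trans2 Hkb nz (fun h => nz (Rs _ _ h)).
      exists g; split => // /(stabE _ _ Gg). rewrite gw => h; apply: nz; exact: Rs _ _ h.
  + move=> g [Gg gw]. apply/stabE => //. rewrite gw; exact: Rr.
  + move=> H [[HsubG Hid Hcomp Hinvs] [f0 [Gf0 nHf0]]] Hpt g Hg.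
    have Gg := HsubG g Hg.
    apply/stabE => //.
    apply: NNPP => ngw. apply: nHf0.
    have C1 : forall f, G f -> ~ R (f w) w -> H f.
    { move=> f Gf nfw.
      have [a [Ga aw agw]] := trans2 Hkb (fun h => ngw (Rs _ _ h)) (fun h => nfw (Rs _ _ h)).
      have Ha : H a by apply: Hpt.
      have Hag := Hcomp a g Ha Hg.
      have [c [Hc agc cag]] := Hinvs _ Hag.
      have Hcf : H (c \o f).
      { apply: Hpt; split; first exact: HGc (HsubG _ Hc) Gf.
        by rewrite /= -agw; apply: agc. }
      have -> : f = (a \o g) \o (c \o f).
      { apply: functional_extensionality => x /=. symmetry; exact: cag (f x). }
      exact: Hcomp. }
    case: (classic (R (f0 w) w)) => hf; last exact: C1.
    have Gfg := HGc f0 g Gf0 Gg.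
    have Hfg : H (f0 \o g).
    { apply: C1 => // /= h. apply: ngw.
      apply: (proj2 (Hinv f0 Gf0 _ _)). exact: Rtr _ _ _ h (Rs _ _ hf). }
    have [gi [Hgi ggi gig]] := Hinvs g Hg.
    have -> : f0 = (f0 \o g) \o gi.
    { apply: functional_extensionality => x /=. by rewrite /= gig. }
    exact: Hcomp.
- split.
  + exists (t ord0), (t (o1 k)). exact: (Ht ord0 (o1 k) (@o01 k)).
  + move=> R' [Rr' Rs' Rt'] Hinv' [x0 [y0 n0]] x y Rxy.
    apply: NNPP => nxy. apply: n0.
    have All : forall u v, ~ R u v -> R' u v.
    { move=> u v nuv. have [g [Gg gx gy]] := trans2 Hkb nxy nuv.
      rewrite -gx -gy. exact: (proj1 (Hinv' g Gg _ _) Rxy). }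
    case: (classic (R x0 y0)) => h; last exact: All.
    have [z nz] := Hz x0.
    have nyz : ~ R y0 z by move=> h'; apply: nz; exact: Rtr _ _ _ h h'.
    apply: Rt' (All _ _ nz) _. apply: Rs'. exact: All.
Qed.
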